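(* Let $\{X_m\}_{m\ge1}$ and $X$ be real functions on $\Omega$ with $X_m\to X$ q.s., and suppose there is a nonnegative $Y\in\mathbb{L}_b^1$ with $|X_m|\le Y$ for all $m\ge1$. Then $\lim_{m\to\infty}\mathbb{E}[X_m]=\mathbb{E}[X]$.
   Context: $\Omega=\{\omega_i\}_{i\in\mathbb{Z}^+}$ is a countable state space. For each $i$, $\underline f_i,\overline f_i$ are continuous real functions of $(\theta_1,\dots,\theta_{i-1})$ (constants for $i=1$), $\underline f_i$ convex, $\overline f_i$ concave, with $0\le\overline f_i-\underline f_i\le c_i$ where $(c_i)$ is a positive sequence with $\sum_i c_i<\infty$. The domain $\mathcal D=\{(\theta_i)_{i\in\mathbb{Z}^+}: 0\le\theta_i\le1,\ \underline f_i(\theta_1,\dots,\theta_{i-1})\le\theta_i\le\overline f_i(\theta_1,\dots,\theta_{i-1})\ \forall i,\ \sum_i\theta_i=1\}$ is nonempty, convex and compact. $P_\theta(\{\omega_i\})=\theta_i$, $E_\theta[X]=\sum_iX(\omega_i)\theta_i$, and $\mathbb{E}[X]=\sup_{\theta\in\mathcal D}E_\theta[X]$. ''q.s.'' means outside a set $A$ with $\sup_{\theta\in\mathcal D}P_\theta(A)=0$. $\mathbb{L}^1=\{X:\Omega\to\mathbb{R}:\ \mathbb{E}[|X|]<\infty\}$ and $\mathbb{L}_b^1=\{X\in\mathbb{L}^1:\ \lim_{n\to\infty}\mathbb{E}[|X|\mathbf 1_{\{|X|>n\}}]=0\}$. *)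

(* Defs.v *)
From Stdlib Require Import Reals.
From Coquelicot Require Import Coquelicot.
Open Scope R_scope.

(* The state space Omega = {omega_i} is indexed by nat (0-based: omega_i <-> i).
   A real function on Omega is a map nat -> R; a probability vector theta is nat -> R.
   flo i, fup i : (nat -> R) -> R are the bounds for theta_i; they are required
   (below, in the theorem) to depend only on theta_0, ..., theta_{i-1}. *)

Definition unit_seq (th : nat -> R) : Prop := forall j, 0 <= th j <= 1.

Definition inD (flo fup : nat -> (nat -> R) -> R) (th : nat -> R) : Prop :=
  (forall i, 0 <= th i <= 1) /\
  (forall i, flo i th <= th i <= fup i th) /\
  infinite_sum th 1.

Definition Etheta (th X : nat -> R) : Rbar :=
  Lim_seq (fun n => sum_f_R0 (fun i => X i * th i) n).

Definition sE (flo fup : nat -> (nat -> R) -> R) (X : nat -> R) : Rbar :=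
  Rbar_lub (fun r => exists th, inD flo fup th /\ r = Etheta th X).

Definition indic (A : nat -> bool) : nat -> R := fun i => if A i then 1 else 0.

(* quasi-sure: P holds outside a set A with sup_theta P_theta(A) = 0 *)
Definition qs (flo fup : nat -> (nat -> R) -> R) (P : nat -> Prop) : Prop :=
  exists A : nat -> bool,
    sE flo fup (indic A) = Finite 0 /\ (forall i, A i = false -> P i).

Definition absf (X : nat -> R) : nat -> R := fun i => Rabs (X i).

Definition L1 (flo fup : nat -> (nat -> R) -> R) (X : nat -> R) : Prop :=
  Rbar_lt (sE flo fup (absf X)) p_infty.

Definition L1b (flo fup : nat -> (nat -> R) -> R) (X : nat -> R) : Prop :=
  L1 flo fup X /\
  let T := fun n : nat => sE flo fup
       (fun i => if Rlt_dec (INR n) (Rabs (X i)) then Rabs (X i) else 0) in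
  (forall n, is_finite (T n)) /\ is_lim_seq (fun n => real (T n)) 0.

Definition depends_on_first (i : nat) (f : (nat -> R) -> R) : Prop :=
  forall th th', (forall j, (j < i)%nat -> th j = th' j) -> f th = f th'.

Definition convex_on_unit (f : (nat -> R) -> R) : Prop :=
  forall th th' t, unit_seq th -> unit_seq th' -> 0 <= t <= 1 ->
    f (fun j => t * th j + (1 - t) * th' j) <= t * f th + (1 - t) * f th'.

Definition concave_on_unit (f : (nat -> R) -> R) : Prop :=
  convex_on_unit (fun th => - f th).

Definition cont_first (i : nat) (f : (nat -> R) -> R) : Prop :=
  forall th, unit_seq th -> forall eps, 0 < eps -> exists delta, 0 < delta /\
    forall th', unit_seq th' -> (forall j, (j < i)%nat -> Rabs (th' j - th j) < delta) ->
      Rabs (f th' - f th) < eps.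

Definition setup (flo fup : nat -> (nat -> R) -> R) (c : nat -> R) : Prop :=
  (forall i, depends_on_first i (flo i) /\ depends_on_first i (fup i)) /\
  (forall i, cont_first i (flo i) /\ cont_first i (fup i)) /\
  (forall i, convex_on_unit (flo i) /\ concave_on_unit (fup i)) /\
  (forall i, 0 < c i) /\ ex_series c /\
  (forall i th, unit_seq th -> 0 <= fup i th - flo i th <= c i) /\
  (exists th, inD flo fup th) /\
  (forall th th' t, inD flo fup th -> inD flo fup th' -> 0 <= t <= 1 ->
     inD flo fup (fun j => t * th j + (1 - t) * th' j)) /\
  (* D compact (product topology on [0,1]^N, metrizable: sequential compactness) *)
  (forall s : nat -> nat -> R, (forall n, inD flo fup (s n)) ->
     exists (phi : nat -> nat) (th : nat -> R),
       (forall n, (phi n < phi (S n))%nat) /\ inD flo fup th /\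
       forall j, is_lim_seq (fun n => s (phi n) j) (th j)).

(* Main.v *)
Require Import Defs.
From Stdlib Require Import Reals Lra Lia Classical ClassicalEpsilon.
From Coquelicot Require Import Coquelicot.
Open Scope R_scope.

Lemma lub_ok (E : Rbar -> Prop) : Rbar_is_lub E (Rbar_lub E).
Proof. unfold Rbar_lub. destruct (Rbar_ex_lub E); auto. Qed.

Lemma psum_mono (a : nat -> R) : (forall i, 0 <= a i) ->
  forall n m, (n <= m)%nat -> sum_f_R0 a n <= sum_f_R0 a m.
Proof.
  intros Ha n m H. induction H. lra.
  simpl. specialize (Ha (S m)). lra.
Qed.

Lemma psum_le_Lim (a : nat -> R) : (forall i, 0 <= a i) ->
  forall n, Rbar_le (sum_f_R0 a n) (Lim_seq (sum_f_R0 a)).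
Proof.
  intros Ha n. rewrite <- (Lim_seq_const (sum_f_R0 a n)).
  apply Lim_seq_le_loc. exists n. intros k Hk. apply psum_mono; auto.
Qed.

Lemma mono_bdd (a : nat -> R) B : (forall i, 0 <= a i) ->
  (forall n, sum_f_R0 a n <= B) -> exists l : R, is_lim_seq (sum_f_R0 a) l.
Proof.
  intros Ha HB. apply (ex_finite_lim_seq_incr _ B); auto.
  intros n; simpl; specialize (Ha (S n)); lra.
Qed.

Lemma conv_dom (a b : nat -> R) B : (forall i, Rabs (a i) <= b i) ->
  (forall n, sum_f_R0 b n <= B) ->
  exists l : R, is_lim_seq (sum_f_R0 a) l /\ Rabs l <= B.
Proof.
  intros Hab HB.
  set (ap := fun i => (Rabs (a i) + a i) / 2).
  set (am := fun i => (Rabs (a i) - a i) / 2).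
  assert (Hp : forall i, 0 <= ap i <= b i).
  { intros i; unfold ap; specialize (Hab i); pose proof (Rle_abs (a i));
    pose proof (Rabs_pos (a i)); pose proof (Rcase_abs (a i)) as [h|h];
    [rewrite Rabs_left in *|rewrite Rabs_right in *]; lra. }
  assert (Hm : forall i, 0 <= am i <= b i).
  { intros i; unfold am; specialize (Hab i);
    pose proof (Rcase_abs (a i)) as [h|h];
    [rewrite Rabs_left in *|rewrite Rabs_right in *]; lra. }
  destruct (mono_bdd ap B) as [lp Hlp]. intros; apply Hp.
  { intros n; eapply Rle_trans; [apply sum_Rle; intros; apply Hp | apply HB]. }
  destruct (mono_bdd am B) as [lm Hlm]. intros; apply Hm.
  { intros n; eapply Rle_trans; [apply sum_Rle; intros; apply Hm | apply HB]. }
  assert (Hl : is_lim_seq (sum_f_R0 a) (lp - lm)).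
  { eapply is_lim_seq_ext; [| apply (is_lim_seq_minus' _ _ _ _ Hlp Hlm)].
    intros n; simpl. rewrite <- minus_sum. apply sum_eq; intros; unfold ap, am; lra. }
  exists (lp - lm); split; auto.
  assert (H := is_lim_seq_abs _ _ Hl). simpl in H.
  change (Rbar_le (Rabs (lp - lm)) B).
  refine (is_lim_seq_le _ (fun _ => B) _ _ _ H (is_lim_seq_const B)). intros n.
  simpl. eapply Rle_trans; [apply sum_f_R0_triangle|].
  eapply Rle_trans; [apply sum_Rle; intros; apply Hab | apply HB].
Qed.

Lemma lub_fin (E : Rbar -> Prop) B : (exists x, E x) ->
  (forall x, E x -> exists r, x = Finite r /\ Rabs r <= B) ->
  exists s, Rbar_lub E = Finite s /\ (forall r, E (Finite r) -> r <= s) /\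
    (forall y, (forall r, E (Finite r) -> r <= y) -> s <= y).
Proof.
  intros [x0 Hx0] HE. destruct (lub_ok E) as [Hu Hl].
  destruct (HE x0 Hx0) as [r0 [-> Hr0]].
  assert (H1 := Hu _ Hx0).
  assert (H2 : Rbar_le (Rbar_lub E) B).
  { apply Hl. intros x Hx. destruct (HE x Hx) as [r [-> Hr]]. simpl.
    pose proof (Rle_abs r); lra. }
  destruct (Rbar_lub E) as [s| |] eqn:Hs; simpl in H1, H2; try contradiction.
  exists s; split; auto. split.
  - intros r Hr. exact (Hu _ Hr).
  - intros y Hy. change (Rbar_le s y). apply Hl. intros x Hx.
    destruct (HE x Hx) as [r [-> _]]. simpl. auto.
Qed.

Section S.
Variables flo fup : nat -> (nat -> R) -> R.

Lemma inD_nonneg th i : inD flo fup th -> 0 <= th i.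
Proof. intros [H _]. apply H. Qed.

Lemma inD_le1 th n : inD flo fup th -> sum_f_R0 th n <= 1.
Proof.
  intros Hth. pose proof (fun i => inD_nonneg th i Hth) as Hn. destruct Hth as [_ [_ Hs]].
  apply Rnot_lt_le; intro Hlt.
  destruct (Hs (sum_f_R0 th n - 1)) as [N HN]. lra.
  specialize (HN (Nat.max N n) (Nat.le_max_l _ _)).
  pose proof (psum_mono th Hn n (Nat.max N n) (Nat.le_max_r _ _)).
  unfold R_dist in HN. rewrite Rabs_right in HN; lra.
Qed.

Lemma sE_ub th U : inD flo fup th -> Rbar_le (Etheta th U) (sE flo fup U).
Proof.
  intros H. destruct (lub_ok (fun r => exists th, inD flo fup th /\ r = Etheta th U)) as [Hu _].
  apply Hu. eauto.
Qed.

Lemma psum_ge_term (a : nat -> R) : (forall i, 0 <= a i) -> forall i, a i <= sum_f_R0 a i.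
Proof.
  intros Ha i. destruct i. simpl; lra. simpl.
  pose proof (psum_mono a Ha 0 i (Nat.le_0_l _)). simpl in H. specialize (Ha 0%nat). lra.
Qed.

Lemma qs_zero A th i : sE flo fup (indic A) = Finite 0 -> inD flo fup th -> A i = true -> th i = 0.
Proof.
  intros H0 Hth HAi. pose proof (inD_nonneg th i Hth).
  assert (Hnn : forall j, 0 <= indic A j * th j).
  { intros j. unfold indic. destruct (A j); pose proof (inD_nonneg th j Hth); lra. }
  pose proof (psum_le_Lim _ Hnn i) as H1. pose proof (sE_ub th (indic A) Hth) as H2.
  unfold Etheta in H2. rewrite H0 in H2.
  pose proof (Rbar_le_trans _ _ _ H1 H2) as H3. simpl in H3.
  pose proof (psum_ge_term _ Hnn i). unfold indic in H4 at 1. rewrite HAi in H4. lra.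
Qed.

Lemma phi_ge (phi : nat -> nat) : (forall n, (phi n < phi (S n))%nat) -> forall k, (k <= phi k)%nat.
Proof. intros H k. induction k. lia. specialize (H k). lia. Qed.

Lemma fin_sum_lim (u : nat -> nat -> R) (v : nat -> R) :
  (forall j, is_lim_seq (fun k => u k j) (v j)) ->
  forall N, is_lim_seq (fun k => sum_f_R0 (u k) N) (sum_f_R0 v N).
Proof.
  intros H N. induction N. simpl. apply H.
  simpl. apply (is_lim_seq_plus' _ _ _ _ IHN (H (S N))).
Qed.

Definition gK (K : nat) (th : nat -> R) (i : nat) : R := if Nat.leb K i then th i else 0.

Lemma tight :
  (forall s : nat -> nat -> R, (forall n, inD flo fup (s n)) ->
     exists (phi : nat -> nat) (th : nat -> R),
       (forall n, (phi n < phi (S n))%nat) /\ inD flo fup th /\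
       forall j, is_lim_seq (fun n => s (phi n) j) (th j)) ->
  forall eta, 0 < eta -> exists K, forall th, inD flo fup th -> forall n,
    sum_f_R0 (gK K th) n <= eta.
Proof.
  intros Hc eta Heta. apply NNPP; intro Hn.
  assert (HK : forall K, exists th, inD flo fup th /\ exists n, eta < sum_f_R0 (gK K th) n).
  { intros K. apply NNPP; intro H. apply Hn. exists K. intros th Hth n.
    apply Rnot_lt_le. intro. apply H. eauto. }
  set (s := fun K => proj1_sig (constructive_indefinite_description _ (HK K))).
  assert (Hs : forall K, inD flo fup (s K) /\ exists n, eta < sum_f_R0 (gK K (s K)) n).
  { intros K. unfold s. destruct (constructive_indefinite_description _ (HK K)); auto. }
  destruct (Hc s (fun K => proj1 (Hs K))) as [phi [th [Hphi [Hth Hlim]]]].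
  pose proof Hth as Hth'. destruct Hth' as [_ [_ Hsum]].
  destruct (Hsum (eta/2)) as [N0 HN0]. lra.
  specialize (HN0 N0 (le_n _)). unfold R_dist in HN0.
  pose proof (fin_sum_lim (fun k => s (phi k)) th Hlim N0) as HL.
  apply is_lim_seq_spec in HL. destruct (HL (mkposreal (eta/2) ltac:(lra))) as [k1 Hk1].
  set (k := Nat.max k1 (S N0)).
  specialize (Hk1 k (Nat.le_max_l _ _)). simpl in Hk1.
  pose proof (phi_ge phi Hphi k) as Hpk.
  assert (HKN : (S N0 <= phi k)%nat) by (unfold k in *; lia).
  destruct (Hs (phi k)) as [HsD [n Hn']].
  set (t := s (phi k)) in *.
  pose proof (fun i => inD_nonneg t i HsD) as Ht0.
  set (h := fun i => if Nat.leb i N0 then t i else 0).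
  assert (Hpt : forall i, h i + gK (phi k) t i <= t i).
  { intros i. unfold h, gK. destruct (Nat.leb i N0) eqn:E1; destruct (Nat.leb (phi k) i) eqn:E2;
    try lra. apply Nat.leb_le in E1. apply Nat.leb_le in E2. lia. specialize (Ht0 i); lra. }
  set (N' := Nat.max n N0).
  assert (Hh0 : forall i, 0 <= h i) by (intros i; unfold h; destruct (Nat.leb i N0); auto; lra).
  assert (Hg0 : forall i, 0 <= gK (phi k) t i) by (intros i; unfold gK; destruct (Nat.leb (phi k) i); auto; lra).
  assert (E1 : sum_f_R0 h N0 = sum_f_R0 t N0).
  { apply sum_eq. intros i Hi. unfold h. apply Nat.leb_le in Hi. rewrite Hi. auto. }
  pose proof (psum_mono h Hh0 N0 N' (Nat.le_max_r _ _)).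
  pose proof (psum_mono _ Hg0 n N' (Nat.le_max_l _ _)).
  assert (sum_f_R0 h N' + sum_f_R0 (gK (phi k) t) N' <= sum_f_R0 t N').
  { rewrite <- plus_sum. apply sum_Rle. intros; apply Hpt. }
  pose proof (inD_le1 t N' HsD).
  assert (sum_f_R0 th N0 > 1 - eta/2).
  { destruct (Rcase_abs (sum_f_R0 th N0 - 1)); [rewrite Rabs_left in HN0|rewrite Rabs_right in HN0]; lra. }
  assert (sum_f_R0 t N0 > 1 - eta).
  { simpl in Hk1. idtac. destruct (Rcase_abs (sum_f_R0 t N0 - sum_f_R0 th N0));
    [rewrite Rabs_left in Hk1|rewrite Rabs_right in Hk1]; lra. }
  lra.
Qed.

Lemma fin_unif (u : nat -> nat -> R) (v : nat -> R) :
  (forall i, is_lim_seq (fun m => u m i) (v i)) -> forall e, 0 < e -> forall K,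
  exists M, forall m, (M <= m)%nat -> forall i, (i < K)%nat -> Rabs (u m i - v i) <= e.
Proof.
  intros H e He K. induction K.
  - exists 0%nat. intros; lia.
  - destruct IHK as [M HM]. pose proof (H K) as HKl. apply is_lim_seq_spec in HKl.
    destruct (HKl (mkposreal e He)) as [M2 HM2].
    exists (Nat.max M M2). intros m Hm i Hi.
    destruct (Nat.eq_dec i K). subst. left. apply HM2. lia.
    apply HM. lia. lia.
Qed.

Lemma sum_scal_l (f : nat -> R) c n : sum_f_R0 (fun i => c * f i) n = c * sum_f_R0 f n.
Proof. induction n; simpl; [|rewrite IHn]; ring. Qed.

End S.

Theorem mainTheorem8 (flo fup : nat -> (nat -> R) -> R) (c : nat -> R)
  (Hsetup : setup flo fup c)
  (Xs : nat -> nat -> R) (X Y : nat -> R)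
  (Hconv : qs flo fup (fun i => is_lim_seq (fun m => Xs m i) (X i)))
  (HYnn : forall i, 0 <= Y i)
  (HY : L1b flo fup Y)
  (Hdom : forall m i, Rabs (Xs m i) <= Y i) :
  is_finite (sE flo fup X) /\ (forall m, is_finite (sE flo fup (Xs m))) /\
  is_lim_seq (fun m => real (sE flo fup (Xs m))) (sE flo fup X).
Proof.
  destruct Hsetup as (_ & _ & _ & _ & _ & _ & Hne & _ & Hcomp).
  destruct Hconv as [A [HA HAc]].
  destruct HY as [HYL1 [HTfin HTlim]].
  assert (HYa : forall i, Rabs (Y i) = Y i) by (intros; apply Rabs_right; apply Rle_ge; auto).
  assert (HBY : exists BY, forall th, inD flo fup th -> forall n,
             sum_f_R0 (fun i => Y i * th i) n <= BY).
  { destruct Hne as [th0 H0].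
    assert (Hk : forall th, inD flo fup th -> forall n,
      Rbar_le (sum_f_R0 (fun i => Y i * th i) n) (sE flo fup (absf Y))).
    { intros th Hth n.
      assert (Hnn : forall i, 0 <= absf Y i * th i).
      { intros i. unfold absf. rewrite HYa. pose proof (inD_nonneg _ _ th i Hth).
        specialize (HYnn i). nra. }
      pose proof (psum_le_Lim _ Hnn n) as H1. pose proof (sE_ub _ _ th (absf Y) Hth) as H2.
      unfold Etheta in H2. pose proof (Rbar_le_trans _ _ _ H1 H2) as H3.
      replace (sum_f_R0 (fun i => Y i * th i) n) with (sum_f_R0 (fun i => absf Y i * th i) n); auto.
      apply sum_eq; intros; unfold absf; rewrite HYa; auto. }
    unfold L1 in HYL1. destruct (sE flo fup (absf Y)) as [b| |] eqn:E.
    - exists b. intros th Hth n. exact (Hk th Hth n).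
    - simpl in HYL1. contradiction.
    - specialize (Hk th0 H0 0%nat). simpl in Hk. contradiction. }
  destruct HBY as [BY HBY].
  assert (Hval : forall U : nat -> R, (forall i, Rabs (U i) <= Y i) -> forall th, inD flo fup th ->
     exists r : R, is_lim_seq (fun n => sum_f_R0 (fun i => U i * th i) n) r /\ Rabs r <= BY).
  { intros U HU th Hth.
    apply (conv_dom _ (fun i => Y i * th i) BY); [|apply HBY; auto].
    intros i. rewrite Rabs_mult. rewrite (Rabs_right (th i)) by (apply Rle_ge; apply (inD_nonneg _ _ th i Hth)).
    apply Rmult_le_compat_r. apply (inD_nonneg _ _ th i Hth). auto. }
  set (X' := fun i => if A i then 0 else X i).
  set (Xs' := fun m i => if A i then 0 else Xs m i).
  assert (HXb : forall i, Rabs (X i) <= Y i \/ A i = true).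
  { intros i. destruct (A i) eqn:Ai; [right; auto|left].
    pose proof (is_lim_seq_abs _ _ (HAc i Ai)) as H. simpl in H.
    change (Rbar_le (Rabs (X i)) (Y i)).
    refine (is_lim_seq_le _ (fun _ => Y i) _ _ _ H (is_lim_seq_const _)). intros m. apply Hdom. }
  assert (HX'b : forall i, Rabs (X' i) <= Y i).
  { intros i. unfold X'. destruct (A i) eqn:Ai. rewrite Rabs_R0; auto.
    destruct (HXb i) as [h|h]; auto. congruence. }
  assert (HXs'b : forall m i, Rabs (Xs' m i) <= Y i).
  { intros m i. unfold Xs'. destruct (A i). rewrite Rabs_R0; auto. auto. }
  assert (HEq : forall th (U : nat -> R), inD flo fup th ->
     Etheta th U = Etheta th (fun i => if A i then 0 else U i)).
  { intros th U Hth. unfold Etheta. apply Lim_seq_ext. intros n. apply sum_eq. intros i _.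
    destruct (A i) eqn:Ai; auto. rewrite (qs_zero _ _ A th i HA Hth Ai). ring. }
  assert (Hlim' : forall i, is_lim_seq (fun m => Xs' m i) (X' i)).
  { intros i. unfold Xs', X'. destruct (A i) eqn:Ai. apply is_lim_seq_const. apply HAc; auto. }
  assert (Hkey : forall eps, 0 < eps -> exists M, forall m, (M <= m)%nat -> forall th, inD flo fup th ->
     forall r1 r2 : R, is_lim_seq (fun n => sum_f_R0 (fun i => Xs' m i * th i) n) r1 ->
     is_lim_seq (fun n => sum_f_R0 (fun i => X' i * th i) n) r2 -> Rabs (r1 - r2) <= eps).
  { intros eps Heps.
    pose proof HTlim as HL. apply is_lim_seq_spec in HL.
    destruct (HL (mkposreal (eps/6) ltac:(lra))) as [N HN]. specialize (HN N (le_n N)). simpl in HN.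
    set (YtN := fun i => if Rlt_dec (INR N) (Rabs (Y i)) then Rabs (Y i) else 0) in *.
    pose proof (HTfin N) as HfN. unfold is_finite in HfN.
    change (Finite (real (sE flo fup YtN)) = sE flo fup YtN) in HfN.
    set (tN := real (sE flo fup YtN)) in *.
    assert (HYt0 : forall i, 0 <= YtN i).
    { intros i. unfold YtN. destruct (Rlt_dec _ _). apply Rabs_pos. lra. }
    assert (HtN : forall th, inD flo fup th -> forall n, sum_f_R0 (fun i => YtN i * th i) n <= tN).
    { intros th Hth n.
      assert (Hnn : forall i, 0 <= YtN i * th i).
      { intros i. pose proof (inD_nonneg _ _ th i Hth). specialize (HYt0 i). nra. }
      pose proof (psum_le_Lim _ Hnn n) as H1. pose proof (sE_ub _ _ th YtN Hth) as H2.
      unfold Etheta in H2. rewrite <- HfN in H2. exact (Rbar_le_trans _ _ _ H1 H2). }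
    assert (HN0 : 0 <= INR N) by apply pos_INR.
    set (eta := eps / (6 * (INR N + 1))).
    assert (Heta : 0 < eta) by (unfold eta; apply Rdiv_lt_0_compat; lra).
    assert (Heta2 : eta * (6 * (INR N + 1)) = eps) by (unfold eta; field; lra).
    destruct (tight flo fup Hcomp eta Heta) as [K HK].
    destruct (fin_unif Xs' X' Hlim' (eps/3) ltac:(lra) K) as [M HM]. exists M.
    intros m Hm th Hth r1 r2 H1 H2.
    pose proof (is_lim_seq_abs _ _ (is_lim_seq_minus' _ _ _ _ H1 H2)) as Hl. simpl in Hl.
    change (Rbar_le (Rabs (r1 - r2)) eps).
    refine (is_lim_seq_le _ (fun _ => eps) _ _ _ Hl (is_lim_seq_const _)). intros n. simpl.
    rewrite <- minus_sum. eapply Rle_trans; [apply sum_f_R0_triangle|].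
    eapply Rle_trans.
    { apply sum_Rle with (Bn := fun i => eps/3 * th i + (2 * INR N * gK K th i + 2 * (YtN i * th i))).
      intros i _. pose proof (inD_nonneg _ _ th i Hth) as T0.
      rewrite <- Rmult_minus_distr_r, Rabs_mult, (Rabs_right (th i)) by lra.
      pose proof (Rabs_pos (Xs' m i - X' i)) as D0. pose proof (HYt0 i) as Y0.
      unfold gK. destruct (Nat.leb K i) eqn:E.
      - assert (Hd : Rabs (Xs' m i - X' i) <= 2 * Y i).
        { unfold Rminus. eapply Rle_trans; [apply Rabs_triang|]. rewrite Rabs_Ropp.
          specialize (HXs'b m i). specialize (HX'b i). lra. }
        unfold YtN in *. destruct (Rlt_dec (INR N) (Rabs (Y i))) as [h|h]; rewrite HYa in *.
        + nra.
        + apply Rnot_lt_le in h. nra.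
      - apply Nat.leb_gt in E. pose proof (HM m Hm i E). nra. }
    rewrite !plus_sum, !sum_scal_l.
    pose proof (inD_le1 _ _ th n Hth). pose proof (HK th Hth n). pose proof (HtN th Hth n).
    assert (tN < eps/6) by (rewrite Rminus_0_r in HN; pose proof (Rle_abs tN); lra).
    nra. }
  assert (Hsup : forall U : nat -> R, (forall i, Rabs ((fun i => if A i then 0 else U i) i) <= Y i) ->
     exists s, sE flo fup U = Finite s /\
     (forall th (r : R), inD flo fup th ->
        is_lim_seq (fun n => sum_f_R0 (fun i => (if A i then 0 else U i) * th i) n) r -> r <= s) /\
     (forall y, (forall th (r : R), inD flo fup th ->
        is_lim_seq (fun n => sum_f_R0 (fun i => (if A i then 0 else U i) * th i) n) r -> r <= y) -> s <= y)).
  { intros U HU.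
    destruct (lub_fin (fun r => exists th, inD flo fup th /\ r = Etheta th U) BY) as [s [Hs1 [Hs2 Hs3]]].
    - destruct Hne as [th0 H0]; eauto.
    - intros x [th [Hth ->]]. rewrite HEq by auto. destruct (Hval _ HU th Hth) as [r [Hr Hrb]].
      exists r; split; auto. unfold Etheta. apply is_lim_seq_unique; auto.
    - exists s. split; [exact Hs1|]. split.
      + intros th r Hth Hr. apply Hs2. exists th. split; auto. rewrite HEq by auto.
        unfold Etheta; symmetry; apply is_lim_seq_unique; auto.
      + intros y Hy. apply Hs3. intros r [th [Hth Hr]]. rewrite HEq in Hr by auto.
        destruct (Hval _ HU th Hth) as [r' [Hr' _]].
        unfold Etheta in Hr. rewrite (is_lim_seq_unique _ _ Hr') in Hr. injection Hr; intros ->.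
        exact (Hy th r' Hth Hr'). }
  destruct (Hsup X HX'b) as [sX [HsX1 [HsX2 HsX3]]].
  split. { unfold is_finite. rewrite HsX1. reflexivity. }
  split. { intros m. destruct (Hsup (Xs m) (HXs'b m)) as [s [Hs1 _]]. unfold is_finite. rewrite Hs1. reflexivity. }
  rewrite HsX1. apply is_lim_seq_spec. intros eps.
  destruct (Hkey (eps/2)) as [M HM]. { destruct eps; simpl; lra. }
  exists M. intros m Hm. destruct (Hsup (Xs m) (HXs'b m)) as [s [Hs1 [Hs2 Hs3]]].
  rewrite Hs1. simpl.
  assert (A1 : s <= sX + eps/2).
  { apply Hs3. intros th r Hth Hr. destruct (Hval _ HX'b th Hth) as [r2 [Hr2 _]].
    pose proof (HM m Hm th Hth r r2 Hr Hr2). pose proof (HsX2 th r2 Hth Hr2).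
    pose proof (Rle_abs (r - r2)). lra. }
  assert (A2 : sX <= s + eps/2).
  { apply HsX3. intros th r Hth Hr. destruct (Hval _ (HXs'b m) th Hth) as [r1 [Hr1 _]].
    pose proof (HM m Hm th Hth r1 r Hr1 Hr). pose proof (Hs2 th r1 Hth Hr1).
    pose proof (Rle_abs (-(r1 - r))). rewrite Rabs_Ropp in H1. lra. }
  destruct eps as [e He]; simpl in *.
  destruct (Rcase_abs (s - sX)); [rewrite Rabs_left|rewrite Rabs_right]; lra.
Qed.
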